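(* Let $\varphi:\mathcal X\to\mathbb R^m$ be a feature map and let $p,q$ be probability distributions on $\mathcal X$ that have full support and are mutually absolutely continuous (so that $dp/dq$ is finite and strictly positive). Then $$F(p\|q,\varphi)\le D(p\|q),$$ with equality if and only if, for $\nu$-almost every $\rho$ in the support of $\nu$, there exists $\theta(\rho)\in\mathbb R^m$ such that for almost all $x\in\mathcal X$, $$\frac{\frac{dp}{dq}(x)-1}{\rho\frac{dp}{dq}(x)+1-\rho}=\theta(\rho)^\top\varphi(x).$$
   Context: Let $\nu$ be a probability measure on $[0,1]$ and define the convex function $f(t)=\int_0^1\frac12\frac{(t-1)^2}{\rho t+1-\rho}\,d\nu(\rho)$ for $t>0$ (these are exactly the operator-convex functions with $f(1)=f'(1)=0$, $f''(1)=1$; e.g. $d\nu(\rho)=2(1-\rho)d\rho$ gives $f(t)=t\log t-t+1$). The $f$-divergence is $D(p\|q)=\int_{\mathcal X} f\big(\frac{dp}{dq}(x)\big)\,dq(x)$. Standing assumption: $dp/dq$ exists and takes values in $[\alpha,1/\alpha]$ for some $\alpha\in(0,1]$. Moments: $\mu_p=\int\varphi\,dp$, $\mu_q=\int\varphi\,dq$, $\Sigma_p=\int\varphi\varphi^\top dp$, $\Sigma_q=\int\varphi\varphi^\top dq$ (assumed finite). The moment-based divergence is $$F(p\|q,\varphi)=\frac12\int_0^1(\mu_p-\mu_q)^\top(\rho\Sigma_p+(1-\rho)\Sigma_q)^{-1}(\mu_p-\mu_q)\,d\nu(\rho),$$ where, when the matrices are not invertible, this is understood as $\inf_{t:(0,1)\to\mathbb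 R}\frac12\int_0^1 t(\rho)\,d\nu(\rho)$ subject to $\begin{pmatrix}\rho\Sigma_p+(1-\rho)\Sigma_q & \mu_p-\mu_q\\ (\mu_p-\mu_q)^\top & t(\rho)\end{pmatrix}\succeq 0$ for all $\rho$ (at $\rho=0,1$ the matrix $\rho\Sigma_p+(1-\rho)\Sigma_q$ is $\Sigma_q$, resp. $\Sigma_p$). *)

(* Defs.v *)
From HB Require Import structures.
From mathcomp Require Import all_boot all_order all_algebra.
From mathcomp Require Import all_classical all_reals all_analysis.
Set Implicit Arguments. Unset Strict Implicit. Unset Printing Implicit Defensive.
Import Order.TTheory GRing.Theory Num.Theory.
Local Open Scope classical_set_scope.
Local Open Scope ring_scope.

Definition psd (R : realType) (n : nat) (A : 'M[R]_n) : Prop :=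
  A^T = A /\ forall v : 'cV[R]_n, 0 <= (v^T *m A *m v) 0 0.

Definition fgen (R : realType) (nu : probability R R) (t : R) : \bar R :=
  (\int[nu]_(rho in `[0%R, 1%R]) ((t - 1) ^+ 2 / (2 * (rho * t + 1 - rho)))%:E)%E.

(* f-divergence D(p||q) = \int f(dp/dq) dq, with g = dp/dq. *)
Definition fdiv (R : realType) d (X : measurableType d) (nu : probability R R)
  (q : probability X R) (g : X -> R) : \bar R :=
  (\int[q]_x fgen nu (g x))%E.

Definition mom1 (R : realType) d (X : measurableType d) (m : nat)
  (P : probability X R) (phi : X -> 'cV[R]_m) : 'cV[R]_m :=
  \col_i Rintegral P setT (fun x => phi x i 0).

Definition mom2 (R : realType) d (X : measurableType d) (m : nat)
  (P : probability X R) (phi : X -> 'cV[R]_m) : 'M[R]_m :=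
  \matrix_(i, j) Rintegral P setT (fun x => phi x i 0 * phi x j 0).

Definition blockF (R : realType) (m : nat) (Sp Sq : 'M[R]_m) (dmu : 'cV[R]_m)
  (rho t : R) : 'M[R]_(m + 1) :=
  block_mx (rho *: Sp + (1 - rho) *: Sq) dmu dmu^T (t%:M).

Definition Fmom (R : realType) d (X : measurableType d) (m : nat)
  (nu : probability R R) (p q : probability X R) (phi : X -> 'cV[R]_m) : \bar R :=
  ereal_inf [set ((2%:R^-1)%:E * \int[nu]_(rho in `[0%R, 1%R]) (t rho)%:E)%E
            | t in [set t : R -> R | measurable_fun setT t /\
                 forall rho, rho \in `[0%R, 1%R] ->
                   psd (blockF (mom2 p phi) (mom2 q phi) (mom1 p phi - mom1 q phi) rho (t rho))]].

(* Main.v *)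
Require Import Defs.
From HB Require Import structures.
From mathcomp Require Import all_boot all_order all_algebra.
From mathcomp Require Import all_classical all_reals all_analysis.
From mathcomp Require Import measurable_realfun.
From mathcomp Require Import ring lra.
Set Implicit Arguments. Unset Strict Implicit. Unset Printing Implicit Defensive.
Import Order.TTheory GRing.Theory Num.Theory.
Local Open Scope classical_set_scope.
Local Open Scope ring_scope.
Import numFieldNormedType.Exports.

Lemma measurable_invR (R : realType) : measurable_fun [set: R] (@GRing.inv R).
Proof.
have -> : [set: R] = [set x | x != 0] `|` [set 0].
  by apply/seteqP; split => x //= _; case: (eqVneq x 0); [right|left].
have o : open [set x : R | x != 0] by exact: open_neq.
apply/measurable_funU => //.
- exact: open_measurable.
split.
- apply: (@open_continuous_measurable_fun R _ _ o).
  move=> x; rewrite inE => /= x0; exact: inv_continuous.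
- exact: measurable_fun_set1.
Qed.

Section Prop1.
Variables (R : realType) (d : measure_display) (X : measurableType d)
  (m : nat) (phi : X -> 'cV[R]_m) (nu : probability R R) (p q : probability X R)
  (g : X -> R) (alpha : R).
Hypothesis nu01 : nu `[0%R, 1%R]%classic = 1%E.
Hypothesis alpha01 : 0 < alpha <= 1.
Hypothesis mg : measurable_fun setT g.
Hypothesis gb : forall x, alpha <= g x <= alpha^-1.
Hypothesis pg : forall A, measurable A -> p A = (\int[q]_(x in A) (g x)%:E)%E.
Hypothesis ip1 : forall i, p.-integrable setT (fun x => (phi x i 0)%:E).
Hypothesis iq1 : forall i, q.-integrable setT (fun x => (phi x i 0)%:E).
Hypothesis ip2 : forall i j, p.-integrable setT (fun x => (phi x i 0 * phi x j 0)%:E).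
Hypothesis iq2 : forall i j, q.-integrable setT (fun x => (phi x i 0 * phi x j 0)%:E).

Definition Iq (f : X -> R) := q.-integrable setT (EFin \o f).

Definition Rq (f : X -> R) := (\int[q]_(x in setT) f x)%R.

Lemma alpha_gt0 : 0 < alpha. Proof. by case/andP: alpha01. Qed.

Lemma alpha_le1 : alpha <= 1. Proof. by case/andP: alpha01. Qed.

Lemma g_ge x : alpha <= g x. Proof. by case/andP: (gb x). Qed.

Lemma g_le x : g x <= alpha^-1. Proof. by case/andP: (gb x). Qed.

Lemma g_gt0 x : 0 < g x. Proof. exact: lt_le_trans alpha_gt0 (g_ge x). Qed.

Lemma IqD f1 f2 : Iq f1 -> Iq f2 -> Iq (fun x => f1 x + f2 x).
Proof. by move=> h1 h2; exact: (integrableD measurableT h1 h2). Qed.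

Lemma IqZ c f : Iq f -> Iq (fun x => c * f x).
Proof. by move=> h; exact: (integrableZl measurableT c h). Qed.

Lemma IqN f : Iq f -> Iq (fun x => - f x).
Proof. by move=> h; rewrite /Iq; under eq_fun do rewrite -mulN1r; exact: IqZ. Qed.

Lemma IqB f1 f2 : Iq f1 -> Iq f2 -> Iq (fun x => f1 x - f2 x).
Proof. by move=> h1 h2; apply: IqD => //; exact: IqN. Qed.

Lemma Iq_sum (I : Type) (s : seq I) (f : I -> X -> R) :
  (forall i, Iq (f i)) -> Iq (fun x => \sum_(i <- s) f i x).
Proof.
move=> h; rewrite /Iq.
have -> : EFin \o (fun x => \sum_(i <- s) f i x) = (fun x => \sum_(i <- s) (EFin \o f i) x)%E.
  by apply/funext => x /=; rewrite -sumEFin.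
apply: (@integrable_sum _ _ _ q setT measurableT I s xpredT (fun i => EFin \o f i)) => i _; exact: h.
Qed.

Lemma Iq_bounded (f : X -> R) (C : R) : measurable_fun setT f -> (forall x, `|f x| <= C) -> Iq f.
Proof.
move=> mf fC; apply: (le_integrable measurableT (g := EFin \o cst C)).
- exact/measurable_EFinP.
- move=> x _ /=; rewrite !lee_fin; apply: le_trans (fC x) _.
  by rewrite ger0_norm // (le_trans _ (fC x)).
- exact: finite_measure_integrable_cst.
Qed.

Lemma RqD f1 f2 : Iq f1 -> Iq f2 -> Rq (fun x => f1 x + f2 x) = Rq f1 + Rq f2.
Proof. by move=> h1 h2; exact: RintegralD. Qed.

Lemma RqZ c f : Iq f -> Rq (fun x => c * f x) = c * Rq f.
Proof. by move=> h; exact: RintegralZl. Qed.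

Lemma Rq_sum (I : Type) (s : seq I) (f : I -> X -> R) :
  (forall i, Iq (f i)) -> Rq (fun x => \sum_(i <- s) f i x) = \sum_(i <- s) Rq (f i).
Proof.
move=> h; elim: s => [|i s IH].
  rewrite big_nil /Rq (eq_Rintegral _ (g := fun _ => 0)); last by move=> x _; rewrite big_nil.
  by rewrite Rintegral_cst // mul0r.
rewrite big_cons -IH -RqD //; last exact: Iq_sum.
by apply: eq_Rintegral => x _; rewrite big_cons.
Qed.

Lemma eq_Rq f1 f2 : (forall x, f1 x = f2 x) -> Rq f1 = Rq f2.
Proof. by move=> h; apply: eq_Rintegral => x _; exact: h. Qed.

Lemma p_ac : p `<< q.
Proof.
apply/null_content_dominatesP => A mA qA0; rewrite pg //.
apply: (null_set_integral mA _ qA0).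
by apply/measurable_EFinP; exact: measurable_funTS.
Qed.

Definition RN := Radon_Nikodym (charge_of_finite_measure p) q.

Lemma RN_ae : ae_eq q setT RN (EFin \o g).
Proof.
apply: integral_ae_eq => //.
- exact: (Radon_Nikodym_integrable (nu := charge_of_finite_measure p) (mu := q) p_ac).
- exact/measurable_EFinP.
- move=> E _ mE; rewrite -Radon_Nikodym_integral //; first by rewrite -pg.
  exact: p_ac.
Qed.

Lemma dens_int (f : X -> R) : measurable_fun setT f ->
  p.-integrable setT (EFin \o f) ->
  (\int[q]_(x in setT) ((g x * f x)%:E) = \int[p]_(x in setT) (f x)%:E)%E.
Proof.
move=> mf ipf.
rewrite -(Radon_Nikodym_change_of_variables p_ac measurableT ipf).
apply: ae_eq_integral => //.
- apply/measurable_EFinP; apply: measurable_funM => //.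
- apply: emeasurable_funM; first exact/measurable_EFinP.
  apply: measurable_int; exact: (Radon_Nikodym_integrable (nu := charge_of_finite_measure p) (mu := q) p_ac).
- apply: filterS RN_ae => x h Tx; rewrite /RN in h.
  by rewrite /= (h Tx) /= -EFinM mulrC.
Qed.

Lemma dens (f : X -> R) : measurable_fun setT f -> p.-integrable setT (EFin \o f) ->
  Iq (fun x => g x * f x) /\ (\int[p]_(x in setT) f x)%R = Rq (fun x => g x * f x).
Proof.
move=> mf ipf.
have iq : Iq (fun x => g x * f x).
  apply/integrableP; split.
    by apply/measurable_EFinP; exact: measurable_funM.
  have mnf : measurable_fun setT (fun x => `|f x|) by exact: measurableT_comp.
  have := dens_int mnf (integrable_norm ipf).
  have -> : (fun x : X => `|(EFin \o (fun x0 => (g x0 * f x0)%R)) x|%E) = (fun x => (g x * `|f x|)%R%:E).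
    by apply/funext => x /=; rewrite normrM (ger0_norm (ltW (g_gt0 x))).
  move=> ->; move/integrableP : ipf => [_].
  by have -> : (fun x : X => `|(EFin \o f) x|%E) = (fun x => (`|f x|)%R%:E) by apply/funext.
split => //.
by rewrite /Rq /Rintegral -dens_int.
Qed.

Lemma RqB f1 f2 : Iq f1 -> Iq f2 -> Rq (fun x => f1 x - f2 x) = Rq f1 - Rq f2.
Proof.
move=> h1 h2; rewrite (RqD h1 (IqN h2)).
by rewrite (eq_Rq (f1 := fun x => - f2 x) (f2 := fun x => -1 * f2 x)) ?RqZ ?mulN1r // => x; rewrite mulN1r.
Qed.

Definition Sp := mom2 p phi.

Definition Sq := mom2 q phi.

Definition dm := mom1 p phi - mom1 q phi.

Definition Mr (rho : R) := rho *: Sp + (1 - rho) *: Sq.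

Definition w (rho : R) (x : X) := rho * g x + 1 - rho.

Lemma mphi i : measurable_fun setT (fun x => phi x i 0).
Proof. by apply/measurable_EFinP; exact: (measurable_int _ (iq1 i)). Qed.

Lemma mphi2 i j : measurable_fun setT (fun x => phi x i 0 * phi x j 0).
Proof. by apply: measurable_funM; exact: mphi. Qed.

Lemma Iphi i : Iq (fun x => phi x i 0).
Proof. exact: iq1. Qed.

Lemma Iphi2 i j : Iq (fun x => phi x i 0 * phi x j 0).
Proof. exact: iq2. Qed.

Lemma Igphi i : Iq (fun x => g x * phi x i 0).
Proof. exact: (dens (mphi i) (ip1 i)).1. Qed.

Lemma Igphi2 i j : Iq (fun x => g x * (phi x i 0 * phi x j 0)).
Proof. exact: (dens (mphi2 i j) (ip2 i j)).1. Qed.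

Lemma dm_E i : dm i 0 = Rq (fun x => (g x - 1) * phi x i 0).
Proof.
rewrite /dm !mxE (dens (mphi i) (ip1 i)).2 -RqB ?Igphi ?Iphi //.
by apply: eq_Rq => x; rewrite mulrBl mul1r.
Qed.

Lemma Mr_E rho i j : Mr rho i j = Rq (fun x => w rho x * (phi x i 0 * phi x j 0)).
Proof.
rewrite /Mr /Sp /Sq !mxE (dens (mphi2 i j) (ip2 i j)).2.
rewrite -!RqZ ?Igphi2 ?Iphi2 // -RqD; last 2 first.
- exact/IqZ/Igphi2.
- exact/IqZ/Iphi2.
by apply: eq_Rq => x; rewrite /w; ring.
Qed.

Lemma Iq_eq f1 f2 : (forall x, f1 x = f2 x) -> Iq f1 -> Iq f2.
Proof. by move=> h; have -> : f2 = f1 by apply/funext => x; rewrite h. Qed.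

Lemma mw rho : measurable_fun setT (w rho).
Proof.
rewrite /w; apply: measurable_funB => //; apply: measurable_funD => //.
exact: measurable_funM.
Qed.

Lemma Iwphi2 rho i j : Iq (fun x => w rho x * (phi x i 0 * phi x j 0)).
Proof.
apply: (@Iq_eq (fun x => rho * (g x * (phi x i 0 * phi x j 0)) + (1 - rho) * (phi x i 0 * phi x j 0))).
  by move=> x; rewrite /w; ring.
by apply: IqD; apply: IqZ; [exact: Igphi2|exact: Iphi2].
Qed.

Lemma Igm1phi i : Iq (fun x => (g x - 1) * phi x i 0).
Proof.
apply: (@Iq_eq (fun x => g x * phi x i 0 - phi x i 0)).
  by move=> x; ring.
by apply: IqB; [exact: Igphi|exact: Iphi].
Qed.

Definition lin (a : 'cV[R]_m) x := (a^T *m phi x) 0 0.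

Definition quadM rho (a : 'cV[R]_m) := (a^T *m Mr rho *m a) 0 0.

Definition lind (a : 'cV[R]_m) := (a^T *m dm) 0 0.

Lemma lin_E a x : lin a x = \sum_i a i 0 * phi x i 0.
Proof. by rewrite /lin mxE; apply: eq_bigr => i _; rewrite mxE. Qed.

Lemma lind_E a : lind a = \sum_i a i 0 * dm i 0.
Proof. by rewrite /lind mxE; apply: eq_bigr => i _; rewrite mxE. Qed.

Lemma quadM_E rho a : quadM rho a = \sum_i \sum_j a i 0 * Mr rho i j * a j 0.
Proof.
rewrite /quadM mxE (exchange_big) /=; apply: eq_bigr => i _.
rewrite mxE mulr_suml; apply: eq_bigr => j _.
by rewrite !mxE.
Qed.


Lemma K1 rho a : quadM rho a = Rq (fun x => w rho x * lin a x ^+ 2).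
Proof.
rewrite quadM_E.
under eq_bigr => i _ do under eq_bigr => j _ do
  rewrite Mr_E mulrC mulrA -RqZ ?Iwphi2 //.
rewrite (eq_Rq (f1 := fun x => w rho x * lin a x ^+ 2)
  (f2 := fun x => \sum_i \sum_j a j 0 * a i 0 * (w rho x * (phi x i 0 * phi x j 0)))); last first.
  move=> x; rewrite lin_E expr2 mulr_suml mulr_sumr; apply: eq_bigr => i _.
  rewrite mulr_sumr mulr_sumr; apply: eq_bigr => j _.
  ring.
rewrite Rq_sum; last by move=> i; apply: Iq_sum => j; apply: IqZ; exact: Iwphi2.
apply: eq_bigr => i _; rewrite Rq_sum //.
by move=> j; apply: IqZ; exact: Iwphi2.
Qed.

Lemma K2 a : lind a = Rq (fun x => (g x - 1) * lin a x).
Proof.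
rewrite lind_E.
under eq_bigr => i _ do rewrite dm_E -RqZ ?Igm1phi //.
rewrite (eq_Rq (f1 := fun x => (g x - 1) * lin a x)
  (f2 := fun x => \sum_i a i 0 * ((g x - 1) * phi x i 0))); last first.
  by move=> x; rewrite lin_E mulr_sumr; apply: eq_bigr => i _; ring.
by rewrite Rq_sum // => i; apply: IqZ; exact: Igm1phi.
Qed.


Definition I01 (rho : R) := 0 <= rho <= 1.

Lemma w_ge rho x : I01 rho -> alpha <= w rho x.
Proof.
move=> /andP[r0 r1]; rewrite /w.
have := g_ge x; have := alpha_le1 => a1 ga.
have h1 : 0 <= rho * (g x - alpha) by apply: mulr_ge0 => //; rewrite subr_ge0.
have h2 : 0 <= (1 - rho) * (1 - alpha) by apply: mulr_ge0; rewrite subr_ge0.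
nra.
Qed.

Lemma w_gt0 rho x : I01 rho -> 0 < w rho x.
Proof. by move=> h; exact: lt_le_trans alpha_gt0 (w_ge x h). Qed.

Lemma w_neq0 rho x : I01 rho -> w rho x != 0.
Proof. by move=> h; rewrite gt_eqF // w_gt0. Qed.

Definition hf rho x := (g x - 1) / w rho x.

Definition kq rho x := (g x - 1) ^+ 2 / w rho x.

Definition tq rho := Rq (kq rho).

Lemma mkq rho : measurable_fun setT (kq rho).
Proof.
rewrite /kq; apply: measurable_funM.
  by apply: measurable_funX; apply: measurable_funB.
apply: (@measurableT_comp _ _ _ _ _ _ (@GRing.inv R)); [exact: measurable_invR|exact: mw].
Qed.

Lemma kq_ge0 rho x : I01 rho -> 0 <= kq rho x.
Proof. by move=> h; rewrite /kq divr_ge0 ?sqr_ge0 // ltW // w_gt0. Qed.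

Lemma kq_le rho x : I01 rho -> kq rho x <= (alpha^-1 + 1) ^+ 2 * alpha^-1.
Proof.
move=> h; rewrite /kq; apply: ler_pM.
- exact: sqr_ge0.
- by rewrite invr_ge0 ltW // w_gt0.
- have gA := g_le x; have g0 := g_gt0 x.
  have A0 : 0 <= alpha^-1 by rewrite invr_ge0 ltW // alpha_gt0.
  move: (alpha^-1) gA A0 => A gA A0.
  have h1 : 0 <= (A + 2 - g x) * (A + g x) by apply: mulr_ge0; lra.
  nra.
- rewrite lef_pV2 ?posrE ?w_gt0 ?alpha_gt0 //; exact: w_ge.
Qed.

Lemma Ikq rho : I01 rho -> Iq (kq rho).
Proof.
move=> h; apply: (@Iq_bounded _ ((alpha^-1 + 1) ^+ 2 * alpha^-1)); first exact: mkq.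
by move=> x; rewrite ger0_norm ?kq_ge0 ?kq_le.
Qed.

Lemma Iwlin2 rho a : Iq (fun x => w rho x * lin a x ^+ 2).
Proof.
apply: (@Iq_eq (fun x => \sum_i \sum_j a j 0 * a i 0 * (w rho x * (phi x i 0 * phi x j 0)))).
  move=> x; rewrite lin_E expr2 mulr_suml mulr_sumr; apply: eq_bigr => i _.
  rewrite mulr_sumr mulr_sumr; apply: eq_bigr => j _.
  ring.
by apply: Iq_sum => i; apply: Iq_sum => j; apply: IqZ; exact: Iwphi2.
Qed.

Lemma Iglin a : Iq (fun x => (g x - 1) * lin a x).
Proof.
apply: (@Iq_eq (fun x => \sum_i a i 0 * ((g x - 1) * phi x i 0))).
  by move=> x; rewrite lin_E mulr_sumr; apply: eq_bigr => i _; ring.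
by apply: Iq_sum => i; apply: IqZ; exact: Igm1phi.
Qed.

Definition Q rho a (s T : R) := quadM rho a + 2 * s * lind a + s ^+ 2 * T.

Lemma key rho a s : I01 rho ->
  Q rho a s (tq rho) = Rq (fun x => w rho x * (lin a x + s * hf rho x) ^+ 2).
Proof.
move=> h.
rewrite (eq_Rq (f1 := fun x => w rho x * (lin a x + s * hf rho x) ^+ 2)
  (f2 := fun x => (w rho x * lin a x ^+ 2 + (2 * s) * ((g x - 1) * lin a x)) + s ^+ 2 * kq rho x)); last first.
  move=> x; rewrite /hf /kq; have := w_neq0 x h; move: (w rho x) => W W0.
  by field.
rewrite RqD; last 2 first.
- by apply: IqD; [exact: Iwlin2|apply: IqZ; exact: Iglin].
- by apply: IqZ; exact: Ikq.
rewrite RqD; [|exact: Iwlin2|apply: IqZ; exact: Iglin].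
by rewrite !RqZ ?Iglin ?Ikq // -K1 -K2 /Q /tq.
Qed.

Lemma Rq_eq0 F : Iq F -> (forall x, 0 <= F x) -> Rq F = 0 <-> {ae q, forall x, F x = 0}.
Proof.
move=> iF F0.
have mF : measurable_fun setT F by apply/measurable_EFinP; exact: measurable_int iF.
have fin := integrable_fin_num measurableT iF.
have E1 : (\int[q]_(x in setT) `|(EFin \o F) x|)%E = (Rq F)%:E.
  rewrite /Rq /Rintegral fineK //; apply: eq_integral => x _ /=.
  by rewrite ger0_norm.
have := ae_eq_integral_abs q measurableT (f := EFin \o F).
rewrite E1 => /(_ (measurableT_comp _ mF)) [] // h1 h2; split.
- move=> h; have := h1 (congr1 EFin h) => ae.
  by apply: filterS ae => x /(_ I) /= [].
- move=> ae; apply/EFin_inj/h2; apply: filterS ae => x /= -> _ //.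
Qed.

Lemma D_ge0 rho a s : I01 rho -> 0 <= Q rho a s (tq rho).
Proof.
move=> h; rewrite key //; apply: Rintegral_ge0 => x _.
by rewrite mulr_ge0 ?sqr_ge0 // ltW // w_gt0.
Qed.

Lemma IwD rho a s : I01 rho -> Iq (fun x => w rho x * (lin a x + s * hf rho x) ^+ 2).
Proof.
move=> h.
apply: (@Iq_eq (fun x => (w rho x * lin a x ^+ 2 + (2 * s) * ((g x - 1) * lin a x)) + s ^+ 2 * kq rho x)).
  move=> x; rewrite /hf /kq; have := w_neq0 x h; move: (w rho x) => W W0.
  by field.
apply: IqD; last by apply: IqZ; exact: Ikq.
by apply: IqD; [exact: Iwlin2|apply: IqZ; exact: Iglin].
Qed.

Lemma D_eq0 rho a s : I01 rho ->
  Q rho a s (tq rho) = 0 <-> {ae q, forall x, lin a x + s * hf rho x = 0}.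
Proof.
move=> h; rewrite key // Rq_eq0 ?IwD //; last first.
  by move=> x; rewrite mulr_ge0 ?sqr_ge0 // ltW // w_gt0.
split; apply: filterS => x.
- by move/eqP; rewrite mulf_eq0 (negbTE (w_neq0 x h)) /= sqrf_eq0 => /eqP.
- by move=> ->; rewrite expr0n mulr0.
Qed.


Lemma Mr_sym rho : (Mr rho)^T = Mr rho.
Proof.
apply/matrixP => i j; rewrite mxE !Mr_E; apply: eq_Rq => x.
by rewrite mulrC [phi x j 0 * _]mulrC mulrC.
Qed.

Lemma cV1E (b : 'cV[R]_1) : b = (b 0 0)%:M.
Proof. by apply/matrixP => i j; rewrite !ord1 mxE eqxx mulr1n. Qed.

Lemma blockQ rho T (v : 'cV[R]_(m + 1)) :
  (v^T *m blockF Sp Sq dm rho T *m v) 0 0 = Q rho (usubmx v) (dsubmx v 0 0) T.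
Proof.
rewrite -[in LHS](vsubmxK v); set a := usubmx v; set b := dsubmx v.
rewrite [in LHS](cV1E b); set s := b 0 0.
rewrite /blockF tr_col_mx mul_row_block mul_row_col tr_scalar_mx.
rewrite !mul_scalar_mx !mul_mx_scalar mulmxDl -scalemxAl.
set A := _ *m _ *m a; set B := dm^T *m a; set C := a^T *m dm.
have BC : B 0 0 = C 0 0 by rewrite /B /C -[a in dm^T *m a]trmxK -trmx_mul mxE.
rewrite /Q /quadM /lind /Mr -/A -/C; clearbody A B C.
rewrite !mxE BC eqxx mulr1n; lra.
Qed.

Lemma psd_block rho T : psd (blockF Sp Sq dm rho T) <-> forall a s, 0 <= Q rho a s T.
Proof.
split.
- move=> [_ H] a s; have := H (col_mx a (s%:M)).
  by rewrite blockQ col_mxKu col_mxKd mxE eqxx mulr1n.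
- move=> H; split.
  + rewrite /blockF tr_block_mx trmxK tr_scalar_mx.
    by have := Mr_sym rho; rewrite /Mr => ->.
  + by move=> v; rewrite blockQ; exact: H.
Qed.


Definition G rho (th : 'cV[R]_m) := 2 * lind th - quadM rho th.

Lemma trZ c (a : 'cV[R]_m) : (c *: a)^T = c *: a^T.
Proof. by apply/matrixP => i j; rewrite !mxE. Qed.

Lemma quadMZ rho c a : quadM rho (c *: a) = c ^+ 2 * quadM rho a.
Proof.
by rewrite /quadM trZ -!scalemxAl -scalemxAr !mxE mulrA expr2.
Qed.

Lemma lindZ c a : lind (c *: a) = c * lind a.
Proof. by rewrite /lind trZ -scalemxAl mxE. Qed.

Lemma Q_G rho th T : Q rho (- th) 1 T = T - G rho th.
Proof.
rewrite -scaleN1r /Q /G quadMZ lindZ; lra.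
Qed.

Lemma Q_Gs rho a s T : s != 0 -> Q rho a s T = s ^+ 2 * (T - G rho ((- s^-1) *: a)).
Proof.
move=> s0; rewrite /Q /G quadMZ lindZ.
by field.
Qed.

Lemma G_le_tq rho th : I01 rho -> G rho th <= tq rho.
Proof. by move=> h; rewrite -subr_ge0 -Q_G; exact: D_ge0. Qed.

Lemma G0 rho : G rho 0 = 0.
Proof. rewrite -(scale0r (0 : 'cV[R]_m)) /G quadMZ lindZ expr0n /=; lra. Qed.

Definition Tsup rho := ereal_sup (range (fun th => (G rho th)%:E)).

Lemma Tsup_le rho : I01 rho -> (Tsup rho <= (tq rho)%:E)%E.
Proof.
move=> h; apply: ub_ereal_sup => _ [th _ <-].
by rewrite lee_fin; exact: G_le_tq.
Qed.

Lemma Tsup_ge0 rho : (0 <= Tsup rho)%E.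
Proof. by apply: ereal_sup_ubound; exists 0 => //; rewrite G0. Qed.

Lemma Tsup_fin rho : I01 rho -> Tsup rho \is a fin_num.
Proof.
move=> h; rewrite ge0_fin_numE ?Tsup_ge0 //.
exact: le_lt_trans (Tsup_le h) (ltry _).
Qed.

Definition clamp (rho : R) := Num.max 0 (Num.min rho 1).

Lemma clamp01 rho : I01 (clamp rho).
Proof.
rewrite /I01 /clamp; apply/andP; split; first by rewrite le_max lexx.
by rewrite ge_max ler01 /= ge_min lexx orbT.
Qed.

Lemma clampE rho : I01 rho -> clamp rho = rho.
Proof.
move=> /andP[r0 r1]; rewrite /clamp.
have -> : Num.min rho 1 = rho by apply/min_idPl.
by apply/max_idPr.
Qed.

Definition tstar rho := fine (Tsup (clamp rho)).

Lemma tstarE rho : I01 rho -> (tstar rho)%:E = Tsup rho.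
Proof. by move=> h; rewrite /tstar clampE // fineK // Tsup_fin. Qed.

Lemma tstar_le rho : I01 rho -> tstar rho <= tq rho.
Proof. by move=> h; rewrite -lee_fin tstarE //; exact: Tsup_le. Qed.

Lemma tstar_ge0 rho : 0 <= tstar rho.
Proof. by rewrite /tstar fine_ge0 // Tsup_ge0. Qed.

Lemma G_le_tstar rho th : I01 rho -> G rho th <= tstar rho.
Proof.
by move=> h; rewrite -lee_fin tstarE //; apply: ereal_sup_ubound; exists th.
Qed.

Lemma feasible_tstar rho : I01 rho -> forall a s, 0 <= Q rho a s (tstar rho).
Proof.
move=> h a s; have [->|s0] := eqVneq s 0.
  have := D_ge0 a 0 h; rewrite /Q expr0n /=; lra.
rewrite Q_Gs //; apply: mulr_ge0; first exact: sqr_ge0.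
by rewrite subr_ge0; exact: G_le_tstar.
Qed.

Lemma feasible_lb rho T : I01 rho -> (forall a s, 0 <= Q rho a s T) -> tstar rho <= T.
Proof.
move=> h H; rewrite -lee_fin tstarE //; apply: ub_ereal_sup => _ [th _ <-].
by rewrite lee_fin -subr_ge0 -Q_G; exact: H.
Qed.

Lemma Rq_ae0 (F : X -> R) : measurable_fun setT F -> {ae q, forall x, F x = 0} -> Rq F = 0.
Proof.
move=> mF ae; rewrite /Rq /Rintegral.
have -> : (\int[q]_(x in setT) (F x)%:E = \int[q]_(x in setT) (cst 0%E x))%E.
  apply: ae_eq_integral => //.
  - exact/measurable_EFinP.
  - by apply: filterS ae => x /= -> _.
by rewrite integral0.
Qed.

Lemma linZ c a x : lin (c *: a) x = c * lin a x.
Proof. by rewrite /lin trZ -scalemxAl mxE. Qed.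

Lemma mlin a : measurable_fun setT (lin a).
Proof.
rewrite (_ : lin a = fun x => \sum_i a i 0 * phi x i 0); last first.
  by apply/funext => x; rewrite lin_E.
apply: measurable_sum => i; apply: measurable_funM => //; exact: mphi.
Qed.

Lemma quadM0_lin rho a : I01 rho -> quadM rho a = 0 -> {ae q, forall x, lin a x = 0}.
Proof.
move=> h e; have : Q rho a 0 (tq rho) = 0 by rewrite /Q e expr0n /=; lra.
move/(D_eq0 a 0 h); apply: filterS => x; rewrite mul0r addr0; exact.
Qed.

Lemma lind_ae0 a : {ae q, forall x, lin a x = 0} -> lind a = 0.
Proof.
move=> ae; rewrite K2; apply: Rq_ae0.
  by apply: measurable_funM; [apply: measurable_funB|exact: mlin].
by apply: filterS ae => x ->; rewrite mulr0.
Qed.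

Lemma solve_M rho : I01 rho -> exists th : 'cV[R]_m, Mr rho *m th = dm.
Proof.
move=> h.
have sub : (dm^T <= Mr rho)%MS.
  rewrite submxE; apply/eqP/matrixP => i j; rewrite [RHS]mxE.
  set K := cokermx (Mr rho).
  have MK : Mr rho *m col j K = 0.
    by rewrite colE mulmxA -colE mulmx_coker; apply/matrixP => k l; rewrite !mxE.
  have q0 : quadM rho (col j K) = 0.
    by rewrite /quadM -mulmxA MK mulmx0 mxE.
  have := lind_ae0 (quadM0_lin h q0); rewrite lind_E => <-.
  rewrite !ord1 mxE; apply: eq_bigr => k _; rewrite !mxE mulrC.
  by [].
have [D dmD] := submxP sub.
exists D^T; apply: trmx_inj; rewrite trmx_mul Mr_sym dmD.
by congr (_ *m _); exact: trmxK.
Qed.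

Lemma entryB (A B : 'M[R]_1) : (A - B) 0 0 = A 0 0 - B 0 0.
Proof. by rewrite !mxE. Qed.

Lemma trB (u v : 'cV[R]_m) : (u - v)^T = u^T - v^T.
Proof. by apply/matrixP => i j; rewrite !mxE. Qed.

Lemma G_max rho th a : I01 rho -> Mr rho *m th = dm -> G rho a <= G rho th.
Proof.
move=> h e.
have e1 : lind a = (a^T *m Mr rho *m th) 0 0 by rewrite /lind -e mulmxA.
have e2 : lind th = quadM rho th by rewrite /lind -e mulmxA.
have sym : (th^T *m Mr rho *m a) 0 0 = (a^T *m Mr rho *m th) 0 0.
  have T1 (A : 'M[R]_1) : A 0 0 = A^T 0 0 by rewrite mxE.
  by rewrite [LHS]T1 !trmx_mul trmxK Mr_sym mulmxA.
have ex : quadM rho (th - a) =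
    quadM rho th - (th^T *m Mr rho *m a) 0 0 - (a^T *m Mr rho *m th) 0 0 + quadM rho a.
  rewrite /quadM trB mulmxBl mulmxBr !mulmxBl !entryB.
  lra.
have := D_ge0 (th - a) 0 h; rewrite /Q expr0n /= ex sym /G e1 e2; lra.
Qed.

Lemma linN a x : lin (- a) x = - lin a x.
Proof. by rewrite -scaleN1r linZ mulN1r. Qed.

Lemma eq_case rho : I01 rho -> tstar rho = tq rho ->
  exists th, {ae q, forall x, hf rho x = lin th x}.
Proof.
move=> h e; have [th Mth] := solve_M h; exists th.
have le1 : tstar rho <= G rho th.
  rewrite -lee_fin tstarE //; apply: ub_ereal_sup => _ [a _ <-].
  by rewrite lee_fin; exact: G_max.
have e2 : G rho th = tq rho by apply/eqP; rewrite eq_le G_le_tq // -e.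
have : Q rho (- th) 1 (tq rho) = 0 by rewrite Q_G e2 subrr.
move/(D_eq0 _ _ h); apply: filterS => x; rewrite linN mul1r => H.
by apply/eqP; rewrite -subr_eq0 addrC; apply/eqP.
Qed.

Lemma eq_case_conv rho : I01 rho -> (exists th, {ae q, forall x, hf rho x = lin th x}) ->
  tq rho <= tstar rho.
Proof.
move=> h [th ae].
have : Q rho (- th) 1 (tq rho) = 0.
  apply/(D_eq0 _ _ h); apply: filterS ae => x ->.
  by rewrite linN mul1r addNr.
rewrite Q_G => /eqP; rewrite subr_eq0 => /eqP ->.
exact: G_le_tstar.
Qed.


Lemma clamp_cont : continuous clamp.
Proof.
move=> x; rewrite /clamp.
apply: (@continuous_max _ R (fun=> 0) (fun r => Num.min r 1)).
  exact: cst_continuous.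
apply: (@continuous_min _ R id (fun=> 1)); first exact: id.
exact: cst_continuous.
Qed.

Lemma aff_cont (c0 c1 : R) : continuous (fun r => c0 + clamp r * c1).
Proof.
move=> x; apply: cvgD; first exact: cvg_cst.
apply: cvgM; first exact: clamp_cont.
exact: cvg_cst.
Qed.

Lemma G_aff rho th : G rho th = (2 * lind th - (th^T *m Sq *m th) 0 0)
  + rho * ((th^T *m Sq *m th) 0 0 - (th^T *m Sp *m th) 0 0).
Proof.
rewrite /G /quadM /Mr mulmxDr mulmxDl -!scalemxAr -!scalemxAl.
set A := th^T *m Sp *m th; set B := th^T *m Sq *m th; clearbody A B.
rewrite !mxE; lra.
Qed.

Lemma Tsup_lsc : lower_semicontinuous (fun rho => Tsup (clamp rho)).
Proof.
apply/lower_semicontinuousP => a.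
have -> : [set x | a%:E < Tsup (clamp x)]%E =
    \bigcup_(th in setT) [set x | a < G (clamp x) th].
  apply/seteqP; split => x /=.
  - move/ereal_sup_gt => [_ [th _ <-]]; rewrite lte_fin => ?; by exists th.
  - move=> [th _ h]; apply: (lt_le_trans _ (ereal_sup_ubound _)); last by exists th.
    by rewrite lte_fin.
apply: bigcup_open => th _.
set c0 := (2 * lind th - (th^T *m Sq *m th) 0 0).
set c1 := ((th^T *m Sq *m th) 0 0 - (th^T *m Sp *m th) 0 0).
have -> : [set x | a < G (clamp x) th] = (fun x => c0 + clamp x * c1) @^-1` [set y | a < y].
  by apply/seteqP; split => x /=; rewrite G_aff.
apply: open_comp; last exact: open_gt.
by move=> x _; exact: aff_cont.
Qed.

Lemma mtstar : measurable_fun setT tstar.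
Proof.
apply/measurable_EFinP.
have := lower_semicontinuous_measurable Tsup_lsc.
apply: (measurable_fun_eqP _ _).1 => x _ /=.
by rewrite /tstar fineK // Tsup_fin // clamp01.
Qed.

Definition I01s : set R := `[0%R, 1%R]%classic.

Lemma I01sP r : I01s r <-> I01 r.
Proof. by rewrite /I01s /= in_itv. Qed.

Lemma I01s_in r : (r \in I01s) = I01 r.
Proof. by apply/idP/idP; rewrite inE => /I01sP. Qed.

Lemma mI01s : measurable I01s.
Proof. exact: measurable_itv. Qed.

Definition kfun (rho : R) (x : X) := (g x - 1) ^+ 2 / (2 * (rho * g x + 1 - rho)).

Lemma kfunE rho x : kfun rho x = 2^-1 * kq rho x.
Proof. by rewrite /kfun /kq /w invfM mulrCA. Qed.

Definition Fz (z : R * X) : \bar R := (\1_I01s z.1 * kfun z.1 z.2)%:E.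

Lemma Fz_ge0 z : (0 <= Fz z)%E.
Proof.
rewrite /Fz lee_fin indicE; case: (boolP (z.1 \in I01s)) => h; last by rewrite mul0r.
by rewrite mul1r kfunE mulr_ge0 ?invr_ge0 ?ler0n // kq_ge0 // -I01s_in.
Qed.

Lemma mFz : measurable_fun setT Fz.
Proof.
apply/measurable_EFinP; apply: measurable_funM.
  apply: (@measurableT_comp _ _ _ _ _ _ (\1_I01s : R -> R)).
    exact: measurable_indic mI01s.
  exact: measurable_fst.
have mg2 : measurable_fun setT (fun z : R * X => g z.2) by exact: measurableT_comp mg measurable_snd.
rewrite /kfun; apply: measurable_funM.
  by apply: measurable_funX; apply: measurable_funB.
apply: (@measurableT_comp _ _ _ _ _ _ (@GRing.inv R)); first exact: measurable_invR.
apply: measurable_funM => //; apply: measurable_funB => //; apply: measurable_funD => //.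
by apply: measurable_funM => //; exact: measurable_fst.
Qed.

Lemma fdivE : fdiv nu q g = (\int[nu]_r fubini_F q Fz r)%E.
Proof.
rewrite /fdiv.
transitivity (\int[q]_x fubini_G nu Fz x)%E.
  apply: eq_integral => x _; rewrite /fgen /fubini_G [LHS]integral_mkcond.
  apply: eq_integral => r _; rewrite patchE /Fz indicE /I01s /=.
  by case: ifP => _; rewrite ?mul1r ?mul0r.
by rewrite -(@fubini_tonelli2 _ _ _ _ _ nu q Fz mFz Fz_ge0) (@fubini_tonelli1 _ _ _ _ _ nu q Fz mFz Fz_ge0).
Qed.

Lemma FF_E r : fubini_F q Fz r = if r \in I01s then (2^-1 * tq r)%:E else 0%E.
Proof.
rewrite /fubini_F; case: ifP => h.
- under eq_integral => x _ do rewrite /Fz /= indicE h mul1r kfunE.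
  have iq : Iq (fun x => 2^-1 * kq r x) by apply: IqZ; apply: Ikq; rewrite -I01s_in.
  rewrite /tq -RqZ; last by apply: Ikq; rewrite -I01s_in.
  by rewrite /Rq /Rintegral fineK // (integrable_fin_num measurableT iq).
- under eq_integral => x _ do rewrite /Fz /= indicE h mul0r.
  by rewrite integral0.
Qed.

Lemma fdivE2 : fdiv nu q g = (\int[nu]_(r in I01s) (2^-1 * tq r)%:E)%E.
Proof.
rewrite fdivE [RHS]integral_mkcond; apply: eq_integral => r _.
by rewrite FF_E patchE.
Qed.

Lemma mTq : measurable_fun I01s (fun r => (2^-1 * tq r)%:E).
Proof.
have mF : measurable_fun setT (fubini_F q Fz).
  exact: (@measurable_fun_fubini_tonelli_F _ _ _ _ _ q Fz mFz Fz_ge0).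
have mF' : measurable_fun I01s (fubini_F q Fz) by exact: measurable_funTS.
apply: (measurable_fun_eqP _ _).1 mF' => r h.
by rewrite FF_E h.
Qed.


Lemma mTs : measurable_fun I01s (fun r => (tstar r)%:E).
Proof. by apply: measurable_funTS; apply/measurable_EFinP; exact: mtstar. Qed.

Lemma int_half (f : R -> R) : measurable_fun I01s (fun r => (f r)%:E) ->
  (forall r, I01s r -> 0 <= f r) ->
  ((2^-1)%:E * \int[nu]_(r in I01s) (f r)%:E = \int[nu]_(r in I01s) (2^-1 * f r)%:E)%E.
Proof.
move=> mf f0; rewrite -ge0_integralZl_EFin //; exact: mI01s.
Qed.

Lemma FmomE : Fmom nu p q phi = (\int[nu]_(r in I01s) (2^-1 * tstar r)%:E)%E.
Proof.
rewrite -int_half; last 2 first.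
- exact: mTs.
- by move=> r _; exact: tstar_ge0.
apply/eqP; rewrite eq_le; apply/andP; split.
- apply: ereal_inf_lbound; exists tstar => //; split; first exact: mtstar.
  move=> r; rewrite in_itv /= => h.
  by apply/(psd_block r (tstar r)); exact: feasible_tstar.
- apply: le_ereal_inf_tmp => _ [t [mt ft] <-].
  apply: lee_wpmul2l; first by rewrite lee_fin invr_ge0 ler0n.
  apply: ge0_le_integral.
  + exact: mI01s.
  + by move=> r _; rewrite lee_fin tstar_ge0.
  + exact: mTs.
  + by apply: measurable_funTS; apply/measurable_EFinP.
  + move=> r /I01sP h; rewrite lee_fin; apply: feasible_lb => //.
    by apply/(psd_block r (t r)); apply: ft; rewrite in_itv.
Qed.

Lemma mTs2 : measurable_fun I01s (fun r => (2^-1 * tstar r)%:E).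
Proof.
apply: measurable_funTS; apply/measurable_EFinP.
by apply: measurable_funM => //; exact: mtstar.
Qed.

Lemma ineq : (Fmom nu p q phi <= fdiv nu q g)%E.
Proof.
rewrite FmomE fdivE2; apply: ge0_le_integral.
- exact: mI01s.
- by move=> r _; rewrite lee_fin mulr_ge0 ?invr_ge0 ?ler0n ?tstar_ge0.
- exact: mTs2.
- exact: mTq.
- move=> r /I01sP h; rewrite lee_fin; apply: ler_wpM2l; first by rewrite invr_ge0 ler0n.
  exact: tstar_le.
Qed.

Definition Cb := (alpha^-1 + 1) ^+ 2 * alpha^-1.

Lemma tq_le r : I01 r -> tq r <= Cb.
Proof.
move=> h; rewrite /tq /Rq.
apply: (le_trans (le_Rintegral (f2 := fun _ => Cb) measurableT (Ikq h) _ _)).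
- exact: finite_measure_integrable_cst.
- by move=> x _; exact: kq_le.
have -> : (\int[q]_(x in setT) Cb)%R = Cb * fine (q setT) by exact: Rintegral_cst.
by rewrite probability_setT /= mulr1.
Qed.

Lemma tq_ge0 r : I01 r -> 0 <= tq r.
Proof. by move=> h; apply: Rintegral_ge0 => x _; exact: kq_ge0. Qed.

Lemma int_bounded (f : R -> R) : measurable_fun I01s (fun r => (f r)%:E) ->
  (forall r, I01s r -> 0 <= f r <= 2^-1 * Cb) ->
  nu.-integrable I01s (fun r => (f r)%:E).
Proof.
move=> mf fb.
apply: (le_integrable mI01s (g := EFin \o cst (2^-1 * Cb))) => //.
- move=> r /fb /andP[f0 fC] /=; rewrite !lee_fin ger0_norm // ger0_norm //.
  exact: le_trans fC.
- exact: (finite_measure_integrable_cst nu _ mI01s).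
Qed.

Lemma eqiff : Fmom nu p q phi = fdiv nu q g <->
   {ae nu, forall rho, rho \in `[0%R, 1%R] ->
      exists theta : 'cV[R]_m,
        {ae q, forall x, (g x - 1) / (rho * g x + 1 - rho) = (theta^T *m phi x) 0 0}}.
Proof.
split.
- rewrite FmomE fdivE2 => e.
  have i1 : nu.-integrable I01s (fun r => (2^-1 * tq r)%:E).
    apply: int_bounded; first exact: mTq.
    move=> r /I01sP h; rewrite mulr_ge0 ?invr_ge0 ?ler0n ?tq_ge0 //=.
    by rewrite ler_wpM2l ?invr_ge0 ?ler0n // tq_le.
  have i2 : nu.-integrable I01s (fun r => (2^-1 * tstar r)%:E).
    apply: int_bounded; first exact: mTs2.
    move=> r /I01sP h; rewrite mulr_ge0 ?invr_ge0 ?ler0n ?tstar_ge0 //=.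
    rewrite ler_wpM2l ?invr_ge0 ?ler0n //; apply: le_trans (tq_le h).
    exact: tstar_le.
  have fin := integrable_fin_num mI01s i1.
  have z : (\int[nu]_(r in I01s) `|((fun r => (2^-1 * tq r)%:E) \- (fun r => (2^-1 * tstar r)%:E)) r|)%E = 0.
    rewrite -[RHS](subee fin) -{2}e -integralB //; last exact: mI01s.
    apply: eq_integral => r; rewrite inE => /I01sP h /=.
    rewrite -EFinB ger0_norm // subr_ge0 ler_wpM2l ?invr_ge0 ?ler0n //.
    exact: tstar_le.
  have ms : measurable_fun I01s ((fun r => (2^-1 * tq r)%:E) \- (fun r => (2^-1 * tstar r)%:E))%E.
    by apply: emeasurable_funB; [exact: mTq|exact: mTs2].
  have ae := (ae_eq_integral_abs nu mI01s ms).1 z.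
  apply: filterS ae => r H; rewrite in_itv /= => h.
  have := H (proj2 (I01sP r) h) => /= /eqP; rewrite -EFinB eqe subr_eq0 => /eqP.
  move/(mulfI _) => e2; apply: eq_case => //; apply/esym/e2.
  by rewrite invr_eq0 pnatr_eq0.
- move=> ae; apply/eqP; rewrite eq_le ineq /= FmomE fdivE2.
  apply: ae_ge0_le_integral.
  + exact: mI01s.
  + by move=> r /I01sP h; rewrite lee_fin mulr_ge0 ?invr_ge0 ?ler0n ?tq_ge0.
  + exact: mTq.
  + by move=> r _; rewrite lee_fin mulr_ge0 ?invr_ge0 ?ler0n ?tstar_ge0.
  + exact: mTs2.
  + apply: filterS ae => r H /I01sP h; rewrite lee_fin ler_wpM2l ?invr_ge0 ?ler0n //.
    by apply: eq_case_conv => //; apply: H; rewrite in_itv.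
Qed.

End Prop1.

Theorem proposition1 (R : realType) (d : measure_display) (X : measurableType d)
  (m : nat) (phi : X -> 'cV[R]_m) (nu : probability R R) (p q : probability X R)
  (g : X -> R) (alpha : R) :
  nu `[0%R, 1%R]%classic = 1%E ->
  0 < alpha <= 1 ->
  measurable_fun setT g ->
  (forall x, alpha <= g x <= alpha^-1) ->
  (forall A, measurable A -> p A = (\int[q]_(x in A) (g x)%:E)%E) ->
  (forall i, p.-integrable setT (fun x => (phi x i 0)%:E)) ->
  (forall i, q.-integrable setT (fun x => (phi x i 0)%:E)) ->
  (forall i j, p.-integrable setT (fun x => (phi x i 0 * phi x j 0)%:E)) ->
  (forall i j, q.-integrable setT (fun x => (phi x i 0 * phi x j 0)%:E)) ->
  (Fmom nu p q phi <= fdiv nu q g)%E /\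
  (Fmom nu p q phi = fdiv nu q g <->
   {ae nu, forall rho, rho \in `[0%R, 1%R] ->
      exists theta : 'cV[R]_m,
        {ae q, forall x, (g x - 1) / (rho * g x + 1 - rho) = (theta^T *m phi x) 0 0}}).
Proof.
move=> H1 H2 H3 H4 H5 H6 H7 H8 H9.
split; [exact: (ineq nu H2 H3 H4 H5 H6 H7 H8 H9) | exact: (eqiff nu H2 H3 H4 H5 H6 H7 H8 H9)].
Qed.
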